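(* Let $n\ge1$, $\boldsymbol z\in\{0,1\}^n$ and $\boldsymbol y,\boldsymbol y'\in\overline{\mathbb R}^n$ satisfy $y_i\le y_i'$ whenever $z_i=1$ and $y_i\ge y_i'$ whenever $z_i=0$. Then $t_{\mathrm R,\phi}(\boldsymbol z,\boldsymbol y)\le t_{\mathrm R,\phi}(\boldsymbol z,\boldsymbol y')$, where $t_{\mathrm R,\phi}$ is either the rank-sum statistic or the Mann–Whitney-type statistic defined below.
   Context: $\overline{\mathbb R}=\mathbb R\cup\{\pm\infty\}$. For $1\le i,j\le n$ and $y,y'\in\overline{\mathbb R}$, $\psi_{i,j}(y,y')=\mathbf 1\{y>y'\}+\mathbf 1\{y=y'\}\mathbf 1\{i\ge j\}$; for $\boldsymbol y\in\overline{\mathbb R}^n$, $\mathrm{rank}_i(\boldsymbol y)=\sum_{j=1}^n\psi_{i,j}(y_i,y_j)$. $\phi$ is a fixed nondecreasing real function on the nonnegative integers. Rank-sum statistic: $t_{\mathrm R,\phi}(\boldsymbol z,\boldsymbol y)=\sum_{i=1}^nz_i\phi(\mathrm{rank}_i(\boldsymbol y))$. Mann–Whitney-type statistic: $t_{\mathrm R,\phi}(\boldsymbol z,\boldsymbol y)=\sum_{i=1}^nz_i\phi\big(\sum_{j=1}^n(1-z_j)\psi_{i,j}(y_i,y_j)\big)$. *)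

(* Defs.v *)
From mathcomp Require Import all_boot all_order all_algebra.
From mathcomp Require Import reals constructive_ereal.
Set Implicit Arguments. Unset Strict Implicit. Unset Printing Implicit Defensive.
Import Order.TTheory GRing.Theory Num.Theory.
Local Open Scope ring_scope.

(* Extended reals \bar R = R ∪ {±oo}, for R a realType.  Indices 1..n are
   represented by 'I_n (0..n-1); the order i >= j is preserved. *)

Definition psi (n : nat) (i j : 'I_n) {R : realType} (y y' : \bar R) : nat :=
  ((y' < y)%E : nat) + ((y == y') && (j <= i)%N : nat).

Definition rank_ (R : realType) (n : nat) (y : 'I_n -> \bar R) (i : 'I_n) : nat :=
  (\sum_(j < n) psi i j (y i) (y j))%N.

Definition t_rank_sum (R : realType) (phi : nat -> R) (n : nat)
    (z : 'I_n -> bool) (y : 'I_n -> \bar R) : R :=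
  \sum_(i < n) (z i)%:R * phi (rank_ y i).

Definition t_mann_whitney (R : realType) (phi : nat -> R) (n : nat)
    (z : 'I_n -> bool) (y : 'I_n -> \bar R) : R :=
  \sum_(i < n) (z i)%:R *
     phi (\sum_(j < n) (1 - z j) * psi i j (y i) (y j))%N.

(* Main.v *)
Require Import Defs.
From mathcomp Require Import all_boot all_order all_algebra.
From mathcomp Require Import reals constructive_ereal.
From mathcomp Require Import ring zify.
Set Implicit Arguments. Unset Strict Implicit. Unset Printing Implicit Defensive.
Import Order.TTheory GRing.Theory Num.Theory.
Local Open Scope ring_scope.

Section Ord.
Variables (R : realType) (n : nat).
Implicit Types (y : 'I_n -> \bar R).

Definition lev y (j i : 'I_n) : bool :=
  ((y j < y i)%E || ((y i == y j) && (j <= i)%N)).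

Lemma psi_lev y i j : psi i j (y i) (y j) = lev y j i.
Proof.
rewrite /psi /lev; have [h|h|h] := ltgtP (y j) (y i).
- by [].
- by [].
- by [].
Qed.

Lemma lev_refl y i : lev y i i.
Proof. by rewrite /lev eqxx leqnn orbT. Qed.

Lemma lev_total y i j : lev y j i || lev y i j.
Proof.
rewrite /lev; have [h|h|h] := ltgtP (y j) (y i) => //=.
by rewrite leq_total.
Qed.

Lemma lev_anti y i j : lev y j i -> lev y i j -> j = i.
Proof.
rewrite /lev => /orP[h1|/andP[/eqP e1 h1]] /orP[h2|/andP[/eqP e2 h2]].
- by move: (lt_trans h1 h2); rewrite ltxx.
- by move: h1; rewrite e2 ltxx.
- by move: h2; rewrite e1 ltxx.
- by apply: val_inj; apply/eqP; rewrite eqn_leq h1 h2.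
Qed.

Lemma lev_trans y k j i : lev y k j -> lev y j i -> lev y k i.
Proof.
rewrite /lev => /orP[h1|/andP[/eqP e1 h1]] /orP[h2|/andP[/eqP e2 h2]].
- by rewrite (lt_trans h1 h2).
- by rewrite e2 h1.
- by rewrite -e1 h2.
- by rewrite e2 e1 eqxx (leq_trans h1 h2) orbT.
Qed.

Lemma rank_card y i : rank_ y i = #|[pred j | lev y j i]|.
Proof.
rewrite /rank_ -sum1_card [RHS]big_mkcond /=.
by apply: eq_bigr => j _; rewrite psi_lev inE; case: lev.
Qed.

Lemma rank_le y j i : lev y j i -> (rank_ y j <= rank_ y i)%N.
Proof.
move=> h; rewrite !rank_card; apply: subset_leq_card; apply/subsetP => k.
by rewrite !inE => hk; apply: lev_trans hk h.
Qed.

Lemma rank_lt y j i : lev y j i -> j != i -> (rank_ y j < rank_ y i)%N.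
Proof.
move=> h ne; rewrite !rank_card; apply: proper_card; apply/properP; split.
  by apply/subsetP => k; rewrite !inE => hk; apply: lev_trans hk h.
exists i; first by rewrite inE lev_refl.
rewrite inE; apply/negP => h'; move: ne; by rewrite (lev_anti h' h) eqxx.
Qed.

Lemma rank_bound y i : (rank_ y i <= n)%N.
Proof. by rewrite rank_card -[X in (_ <= X)%N]card_ord max_card. Qed.

Lemma rank_split (z : 'I_n -> bool) y i :
  rank_ y i = (#|[pred j | z j && lev y j i]| + #|[pred j | ~~ z j && lev y j i]|)%N.
Proof.
rewrite rank_card -(cardID [pred j | z j] [pred j | lev y j i]).
by congr addn; apply: eq_card => j; rewrite !inE andbC.
Qed.

End Ord.
Section Main.
Variables (R : realType) (n : nat) (z : 'I_n -> bool) (y y' : 'I_n -> \bar R).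
Hypothesis h1 : forall i, z i -> (y i <= y' i)%E.
Hypothesis h0 : forall i, ~~ z i -> (y' i <= y i)%E.

Lemma pair_mono i j : z i -> ~~ z j -> lev y j i -> lev y' j i.
Proof.
move=> zi zj; have a := h1 zi; have b := h0 zj.
rewrite /lev => /orP[h|/andP[/eqP e h]].
  by rewrite (le_lt_trans b (lt_le_trans h a)).
have : (y' j <= y' i)%E by rewrite (le_trans b) // -e.
rewrite le_eqVlt => /orP[/eqP ->|->] //.
by rewrite eqxx h orbT.
Qed.

Lemma count_le k :
  (#|[pred i | z i && (rank_ y' i <= k)%N]| <= #|[pred i | z i && (rank_ y i <= k)%N]|)%N.
Proof.
set A := [pred i | z i && (rank_ y' i <= k)%N].
set B := [pred i | z i && (rank_ y i <= k)%N].
rewrite leqNgt; apply/negP => hAB.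
have : ~~ (A \subset B).
  by apply/negP => sAB; move: (subset_leq_card sAB); rewrite leqNgt hAB.
case/subsetPn => x xA xB.
have xD : (fun i => z i && ~~ (rank_ y i <= k)%N) x.
  by move: xA xB; rewrite !inE => /andP[-> _] ->.
case: (@arg_minnP _ x (fun i => z i && ~~ (rank_ y i <= k)%N) (rank_ y) xD) => u /andP[zu uk] umin.
case: (@arg_maxnP _ x A (rank_ y') xA) => w wA wmax.
have au : (#|[pred j | z j && lev y j u]| <= (#|B|).+1)%N.
  apply: (@leq_trans #|[predU1 u & B]|); last by rewrite cardU1; case: (u \notin B).
  apply: subset_leq_card; apply/subsetP => j; rewrite !inE => /andP[zj lju].
  case: (eqVneq j u) => [->|nju] //=.
  rewrite zj /= leqNgt; apply/negP => hk.
  have := umin j; rewrite zj -ltnNge hk => /(_ isT).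
  by rewrite leqNgt (rank_lt lju nju).
have [i iA lui] : exists2 i, i \in A & lev y u i.
  case: (pickP [pred i | (i \in A) && lev y u i]) => [i /andP[]|hn]; first by exists i.
  have : (#|[predU1 u & A]| <= #|[pred j | z j && lev y j u]|)%N.
    apply: subset_leq_card; apply/subsetP => j; rewrite !inE.
    case/orP => [/eqP ->|/andP[zj jk]]; first by rewrite zu lev_refl.
    rewrite zj /=; case/orP: (lev_total y j u) => // luj.
    by move: (hn j); rewrite /= inE zj jk luj.
  rewrite cardU1.
  have -> : u \notin A.
    apply/negP => uA; by move: (hn u); rewrite /= uA lev_refl.
  move=> h; move: (leq_trans h au); rewrite add1n ltnS leqNgt hAB //.
have levA : forall j, j \in A -> lev y' j w.
  move=> j jA; case/orP: (lev_total y' w j) => // lwj.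
  case: (eqVneq w j) => [->|nwj]; first by rewrite lev_refl.
  by move: (wmax j jA); rewrite /= leqNgt (rank_lt lwj nwj).
have ziA : z i by move: iA; rewrite inE => /andP[].
have cuw : (#|[pred j | ~~ z j && lev y j u]| <= #|[pred j | ~~ z j && lev y' j w]|)%N.
  apply: subset_leq_card; apply/subsetP => j; rewrite !inE => /andP[zj lju].
  rewrite zj /=; apply: (lev_trans _ (levA i iA)).
  exact: (pair_mono ziA zj (lev_trans lju lui)).
have aw : (#|A| <= #|[pred j | z j && lev y' j w]|)%N.
  apply: subset_leq_card; apply/subsetP => j jA; rewrite inE levA // andbT.
  by move: jA; rewrite inE => /andP[].
have rw : (rank_ y' w <= k)%N by move: wA; rewrite /A /= => /andP[].
move: uk; rewrite -ltnNge (rank_split z y u) => uk.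
move: rw; rewrite (rank_split z y' w) => rw.
lia.
Qed.
End Main.
Section Layer.
Variables (R : realType) (phi : nat -> R).
Hypothesis phi_mono : forall a b : nat, (a <= b)%N -> phi a <= phi b.

Lemma phi_tel m N : \sum_(k < N) (k < m)%:R * (phi k.+1 - phi k) = phi (minn m N) - phi 0%N.
Proof.
elim: N => [|N IH]; first by rewrite big_ord0 minn0 subrr.
rewrite big_ord_recr /= IH.
case: (ltnP N m) => h.
  have -> : minn m N.+1 = N.+1 by lia.
  rewrite mul1r; ring.
have -> : minn m N.+1 = m by lia.
by rewrite mul0r addr0.
Qed.

Lemma phi_dec m N : (m <= N)%N -> phi m = phi 0%N + \sum_(k < N) (k < m)%:R * (phi k.+1 - phi k).
Proof. move=> h; rewrite phi_tel; have -> : minn m N = m by lia.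
ring. Qed.

Lemma layer (m : nat) (P : pred 'I_m) (f g : 'I_m -> nat) N :
  (forall i, (f i <= N)%N) -> (forall i, (g i <= N)%N) ->
  (forall k, #|[pred i | P i && (g i <= k)%N]| <= #|[pred i | P i && (f i <= k)%N]|)%N ->
  \sum_(i | P i) phi (f i) <= \sum_(i | P i) phi (g i).
Proof.
move=> hf hg hc.
have E : forall h : 'I_m -> nat, (forall i, (h i <= N)%N) ->
  \sum_(i | P i) phi (h i) = \sum_(i | P i) phi 0%N +
     \sum_(k < N) (#|[pred i | P i && (k < h i)%N]|)%:R * (phi k.+1 - phi k).
  move=> h hh.
  rewrite (eq_bigr _ (fun i _ => phi_dec (hh i))) big_split /=; congr (_ + _).
  rewrite exchange_big /=; apply: eq_bigr => k _.
  rewrite -big_distrl /= -natr_sum; congr (_%:R * _).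
  rewrite -sum1_card [RHS]big_mkcond [LHS]big_mkcond /=.
  by apply: eq_bigr => i _; rewrite inE; case: (P i); case: (k < h i)%N.
rewrite (E f hf) (E g hg) lerD2l; apply: ler_sum => k _.
apply: ler_wpM2r; first by rewrite subr_ge0 phi_mono.
rewrite ler_nat.
have sp : forall h : 'I_m -> nat,
  (#|[pred i | P i && (k < h i)%N]| + #|[pred i | P i && (h i <= k)%N]|)%N = #|[pred i | P i]|.
  move=> h; rewrite -(cardID [pred i | (h i <= k)%N] [pred i | P i]) addnC.
  by congr addn; apply: eq_card => i; rewrite !inE // ltnNge andbC.
have := sp f; have := sp g; have := hc k; lia.
Qed.
End Layer.

Theorem lemma1 (R : realType) (phi : nat -> R)
    (phi_mono : forall a b : nat, (a <= b)%N -> phi a <= phi b)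
    (n : nat) (hn : (1 <= n)%N)
    (z : 'I_n -> bool) (y y' : 'I_n -> \bar R)
    (h1 : forall i, z i -> (y i <= y' i)%E)
    (h0 : forall i, ~~ z i -> (y' i <= y i)%E) :
  t_rank_sum phi z y <= t_rank_sum phi z y' /\
  t_mann_whitney phi z y <= t_mann_whitney phi z y'.
Proof.
split.
  have conv : forall yy, t_rank_sum phi z yy = \sum_(i | z i) phi (rank_ yy i).
    move=> yy; rewrite /t_rank_sum [RHS]big_mkcond; apply: eq_bigr => i _.
    by case: (z i); rewrite ?mul1r ?mul0r.
  rewrite !conv; apply: (@layer _ _ phi_mono _ _ _ _ n).
  - by move=> i; apply: rank_bound.
  - by move=> i; apply: rank_bound.
  - by move=> k; apply: count_le.
rewrite /t_mann_whitney; apply: ler_sum => i _.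
case zi: (z i); last by rewrite !mul0r.
rewrite !mul1r; apply: phi_mono; apply: leq_sum => j _.
case zj: (z j); first by rewrite !subnn !mul0n.
rewrite !mul1n !psi_lev; case lj: (lev y j i) => //.
by rewrite (pair_mono h1 h0 zi (negbT zj) lj).
Qed.
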